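(* If $A\in\mathfrak{B}_{n\times m}$ is a canonical matrix, then $A$ is semi-canonical.
   Context: $\mathfrak{B}_{n\times m}$ denotes the set of all $n\times m$ matrices with entries in $\{0,1\}$. For $A=[a_{ij}]\in\mathfrak{B}_{n\times m}$, $r(A)=\langle x_1,\dots,x_n\rangle$ with $x_i=\sum_{j=1}^m a_{ij}2^{m-j}$ and $c(A)=\langle y_1,\dots,y_m\rangle$ with $y_j=\sum_{i=1}^n a_{ij}2^{n-i}$; tuples are compared lexicographically. $A\sim B$ means $A=XBY$ for some permutation matrices $X$ ($n\times n$) and $Y$ ($m\times m$). $A$ is canonical if $r(A)$ is the lexicographically minimal element of $\{r(B)\mid B\sim A\}$. $A$ is semi-canonical if $x_1\le\cdots\le x_n$ and $y_1\le\cdots\le y_m$. *)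

(* Defs.v *)
From mathcomp Require Import all_boot all_order all_algebra all_fingroup.
Set Implicit Arguments. Unset Strict Implicit. Unset Printing Implicit Defensive.
Import Order.TTheory GRing.Theory Num.Theory.
Local Open Scope ring_scope.

Definition binmx (n m : nat) (A : 'M[int]_(n, m)) : Prop :=
  forall i j, A i j = 0 \/ A i j = 1.

(* x_i = sum_j a_ij 2^(m-j) (1-indexed j); with 0-indexed j: 2^(m-1-j). *)
Definition rowval (n m : nat) (A : 'M[int]_(n, m)) (i : 'I_n) : int :=
  \sum_(j < m) A i j * 2 ^+ (m - j.+1)%N.

(* y_j = sum_i a_ij 2^(n-i) (1-indexed i). *)
Definition colval (n m : nat) (A : 'M[int]_(n, m)) (j : 'I_m) : int :=
  \sum_(i < n) A i j * 2 ^+ (n - i.+1)%N.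

Definition rtuple (n m : nat) (A : 'M[int]_(n, m)) : seq int :=
  [seq rowval A i | i <- enum 'I_n].

Definition ctuple (n m : nat) (A : 'M[int]_(n, m)) : seq int :=
  [seq colval A j | j <- enum 'I_m].

Fixpoint lexle (s t : seq int) : bool :=
  match s, t with
  | [::], _ => true
  | _ :: _, [::] => false
  | x :: s', y :: t' => (x < y) || ((x == y) && lexle s' t')
  end.

Definition mxequiv (n m : nat) (A B : 'M[int]_(n, m)) : Prop :=
  exists (X : 'M[int]_n) (Y : 'M[int]_m),
    is_perm_mx X /\ is_perm_mx Y /\ A = X *m B *m Y.

Definition canonical (n m : nat) (A : 'M[int]_(n, m)) : Prop :=
  binmx A /\ forall B : 'M[int]_(n, m), binmx B -> mxequiv B A -> lexle (rtuple A) (rtuple B).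

Definition semi_canonical (n m : nat) (A : 'M[int]_(n, m)) : Prop :=
  (forall i1 i2 : 'I_n, (i1 <= i2)%N -> rowval A i1 <= rowval A i2) /\
  (forall j1 j2 : 'I_m, (j1 <= j2)%N -> colval A j1 <= colval A j2).

(* Main.v *)
Require Import Defs.
From mathcomp Require Import all_boot all_order all_algebra all_fingroup.
From mathcomp Require Import zify.
Import Order.TTheory GRing.Theory Num.Theory.

Section Helpers.
Local Open Scope ring_scope.

Definition V (f : nat -> int) n := \sum_(i < n) f i * 2 ^+ (n - i.+1).

Lemma VS f n : V f n.+1 = 2 * V f n + f n.
Proof.
rewrite /V big_ord_recr /= subnn expr0 mulr1 big_distrr /=.
congr (_ + _); apply: eq_bigr => i _ /=.
have -> : (n.+1 - i.+1 = (n - i.+1).+1)%N by have := ltn_ord i; lia.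
by rewrite exprS mulrCA.
Qed.

Lemma Vinj f g n : (forall i, f i = 0 \/ f i = 1) -> (forall i, g i = 0 \/ g i = 1) ->
  V f n = V g n -> forall i, (i < n)%N -> f i = g i.
Proof.
move=> bf bg; elim: n => [|n IH] // E i hi.
rewrite !VS in E.
have [E1 E2] : V f n = V g n /\ f n = g n.
  by have := bf n; have := bg n; lia.
rewrite ltnS leq_eqVlt in hi; case/orP: hi => [/eqP -> //|hi].
exact: IH.
Qed.

Lemma Vfirst f g n : (forall i, f i = 0 \/ f i = 1) -> (forall i, g i = 0 \/ g i = 1) ->
  V g n < V f n -> exists i0, [/\ (i0 < n)%N, (forall i, (i < i0)%N -> f i = g i),
     f i0 = 1 & g i0 = 0].
Proof.
move=> bf bg; elim: n => [|n IH].
  by rewrite /V !big_ord0 ltxx.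
rewrite !VS => H.
case: (ltP (V g n) (V f n)) => h.
  have [i0 [h1 h2 h3 h4]] := IH h.
  by exists i0; split => //; apply: ltn_trans h1 _.
have [E1 E2 E3] : [/\ V f n = V g n, f n = 1 & g n = 0].
  by have := bf n; have := bg n; split; lia.
exists n; split => //.
exact: Vinj.
Qed.

Lemma lexcontra (s t : seq int) k : (k < size s)%N -> size s = size t ->
  (forall i, (i < k)%N -> nth 0 s i = nth 0 t i) -> nth 0 t k < nth 0 s k ->
  ~~ lexle s t.
Proof.
elim: s t k => [|x s IH] [|y t] [|k] //= hk hsz heq hlt.
  by rewrite negb_or (lt_gtF hlt) /= (gt_eqF hlt).
have := heq 0%N (ltn0Sn _) => /= ->.
rewrite ltxx eqxx /=.
apply: (IH t k) => //.
- by case: hsz.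
- by move=> i hi; apply: (heq i.+1).
Qed.

Lemma nth_rtuple n m (C : 'M[int]_(n, m)) (i : 'I_n) : nth 0 (rtuple C) i = rowval C i.
Proof. by rewrite /rtuple (nth_map i) ?size_enum_ord // nth_ord_enum. Qed.

Lemma rtuple_contra n m (A B : 'M[int]_(n, m)) (k : 'I_n) :
  (forall i : 'I_n, (i < k)%N -> rowval A i = rowval B i) ->
  rowval B k < rowval A k -> ~~ lexle (rtuple A) (rtuple B).
Proof.
move=> H1 H2.
have sz : forall C : 'M[int]_(n, m), size (rtuple C) = n.
  by move=> C; rewrite /rtuple size_map size_enum_ord.
apply: (@lexcontra _ _ k); rewrite ?sz //.
  move=> i hi.
  have hin : (i < n)%N by apply: ltn_trans hi (ltn_ord k).
  have := @nth_rtuple _ _ A (Ordinal hin); have := @nth_rtuple _ _ B (Ordinal hin).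
  move=> /= -> ->; exact: H1.
by rewrite !nth_rtuple.
Qed.

Lemma swap_lt m (r : 'I_m -> int) (j1 j2 : 'I_m) : (j1 < j2)%N -> r j1 = 1 -> r j2 = 0 ->
  \sum_(j < m) r (tperm j1 j2 j) * 2 ^+ (m - j.+1) < \sum_(j < m) r j * 2 ^+ (m - j.+1).
Proof.
move=> hlt h1 h2.
have hne : j2 != j1 by rewrite neq_ltn hlt orbT.
have eA : forall F : 'I_m -> int, \sum_(j < m) F j =
    F j1 + (F j2 + \sum_(j < m | (j != j1) && (j != j2)) F j).
  by move=> F; rewrite (bigD1 j1) // (bigD1 j2).
rewrite eA [X in _ < X]eA /=.
rewrite tpermL tpermR h1 h2 !mul0r !mul1r !add0r.
have -> : \sum_(j < m | (j != j1) && (j != j2)) r (tperm j1 j2 j) * 2 ^+ (m - j.+1)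
   = \sum_(j < m | (j != j1) && (j != j2)) r j * 2 ^+ (m - j.+1).
  apply: eq_bigr => j /andP [a b].
  by rewrite tpermD // eq_sym.
rewrite ltrD2r ltr_eXn2l //.
have := ltn_ord j2; lia.
Qed.

End Helpers.

Theorem corollary2 (n m : nat) (A : 'M[int]_(n, m)) :
  binmx A -> canonical A -> semi_canonical A.
Proof.
move=> bA [_ cA]; split.
- move=> i1 i2 hle; rewrite leNgt; apply/negP => hlt.
  have hne : i1 != i2 by apply/eqP => E; rewrite E ltxx in hlt.
  pose B := row_perm (tperm i1 i2) A.
  have bB : binmx B by move=> i j; rewrite mxE.
  have eB : mxequiv B A.
    exists (perm_mx (tperm i1 i2)), (1%:M)%R; split; first exact: perm_mx_is_perm.
    split; first exact: is_perm_mx1.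
    by rewrite mulmx1 /B row_permE.
  have rB : forall i, rowval B i = rowval A (tperm i1 i2 i).
    by move=> i; rewrite /rowval; apply: eq_bigr => j _; rewrite mxE.
  move: (cA B bB eB); apply/negP.
  apply: (@rtuple_contra _ _ _ _ i1).
    move=> i hi; rewrite rB tpermD //.
      by rewrite neq_ltn hi orbT.
    by rewrite neq_ltn (leq_trans hi hle) orbT.
  by rewrite rB tpermL.
- move=> j1 j2 hle; rewrite leNgt; apply/negP => hlt.
  case: n A bA cA hlt => [|n'] A bA cA hlt.
    by rewrite /colval !big_ord0 ltxx in hlt.
  pose f : nat -> int := fun i => A (inord i) j1.
  pose g : nat -> int := fun i => A (inord i) j2.
  have cf : colval A j1 = V f n'.+1.
    by rewrite /colval /V; apply: eq_bigr => i _; rewrite /f inord_val.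
  have cg : colval A j2 = V g n'.+1.
    by rewrite /colval /V; apply: eq_bigr => i _; rewrite /g inord_val.
  rewrite cf cg in hlt.
  have [i0 [hi0 hpre h1 h2]] := Vfirst f g n'.+1 (fun i => bA (inord i) j1) (fun i => bA (inord i) j2) hlt.
  have hne : j1 != j2 by apply/eqP => E; rewrite /f /g E in h1 h2; rewrite h1 in h2.
  have hj : (j1 < j2)%N by rewrite ltn_neqAle hne hle.
  pose B := col_perm (tperm j1 j2) A.
  have bB : binmx B by move=> i j; rewrite mxE.
  have eB : mxequiv B A.
    exists (1%:M)%R, (perm_mx (tperm j1 j2)^-1); split; first exact: is_perm_mx1.
    split; first exact: perm_mx_is_perm.
    by rewrite mul1mx /B col_permE.
  move: (cA B bB eB); apply/negP.
  apply: (@rtuple_contra _ _ _ _ (inord i0)).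
    move=> i; rewrite inordK // => hi.
    have := hpre i hi; rewrite /f /g inord_val => E.
    rewrite /rowval; apply: eq_bigr => j _; rewrite mxE.
    by case: tpermP => [->|->|] //; rewrite E.
  rewrite /rowval.
  under eq_bigr => j _ do rewrite mxE.
  apply: swap_lt => //.

Qed.
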